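(* Let $R$ be a commutative ring, $I=(f_1,\dots,f_r)$, $\mathfrak a=(a_1,\dots,a_s)\subseteq I$, $\Phi=(c_{ij})$ an $r\times s$ matrix with $a_j=\sum_ic_{ij}f_i$, $\Gamma_\bullet$ as in the context, and $B_\bullet=B_\bullet(\mathbf f;R)$ the Koszul boundaries. Then $\langle\Gamma_\bullet\cdot B_\bullet\rangle_r=\mathfrak a$.
   Context: $K_\bullet(\mathbf f;R)$ is the Koszul DG algebra: exterior algebra over $R$ on $e_1,\dots,e_r$ with $\partial e_i=f_i$; $B_k=\partial(K_{k+1})$. $\zeta_j=\sum_ic_{ij}e_i$ and $\Gamma_\bullet$ is the $R$-subalgebra generated by $\zeta_1,\dots,\zeta_s$. $\langle\Gamma_\bullet\cdot B_\bullet\rangle_r$ is the $R$-span in $K_r$ of the products $\gamma\wedge b$ with $\gamma\in\Gamma_j$, $b\in B_{r-j}$, identified with an ideal of $R$ via $K_r=Re_1\wedge\cdots\wedge e_r\cong R$. *)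

(* Defs.v *)
From HB Require Import structures.
From mathcomp Require Import all_boot all_order all_algebra.
Set Implicit Arguments. Unset Strict Implicit. Unset Printing Implicit Defensive.
Import GRing.Theory.
Local Open Scope ring_scope.

(* Koszul DG algebra K(f;R) = exterior algebra over R on e_1..e_r.
   An element is represented by its coordinates on the basis
   e_S = e_{i1} /\ ... /\ e_{ik} (i1 < ... < ik), S = {i1,...,ik} : {set 'I_r}. *)
Definition kosz (R : comPzRingType) (r : nat) := {ffun {set 'I_r} -> R}.

Section Koszul.
Variables (R : comPzRingType) (r : nat).
Implicit Types (x y : kosz R r) (S T U : {set 'I_r}).

Definition kzero : kosz R r := [ffun _ => 0].
Definition kadd x y : kosz R r := [ffun U => x U + y U].
Definition kscale (a : R) x : kosz R r := [ffun U => a * x U].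

Definition kbasis S : kosz R r := [ffun U => (U == S)%:R].
Definition kone : kosz R r := kbasis set0.
Definition ktop : kosz R r := kbasis setT.

(* sign of e_S /\ e_T = sgn S T * e_(S :|: T) for disjoint S, T *)
Definition ksgn S T : R :=
  (-1) ^+ #|[set p : 'I_r * 'I_r | [&& p.1 \in S, p.2 \in T & (p.2 < p.1)%N]]|.

Definition kwedge x y : kosz R r :=
  [ffun U => \sum_(S : {set 'I_r}) \sum_(T : {set 'I_r} | [disjoint S & T] && (S :|: T == U))
               ksgn S T * x S * y T].

Definition khomog (k : nat) x : Prop := forall S, #|S| != k -> x S = 0.

Definition kdiff (f : 'I_r -> R) x : kosz R r :=
  [ffun U => \sum_(S : {set 'I_r}) \sum_(i in S | S :\ i == U)
               (-1) ^+ #|[set l in S | (l < i)%N]| * f i * x S].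

Definition kbound (f : 'I_r -> R) (k : nat) x : Prop :=
  exists y, khomog k.+1 y /\ x = kdiff f y.

Definition kzeta (s : nat) (c : 'M[R]_(r, s)) (j : 'I_s) : kosz R r :=
  [ffun U => \sum_(i : 'I_r) (U == [set i])%:R * c i j].

Inductive kGamma (s : nat) (c : 'M[R]_(r, s)) : kosz R r -> Prop :=
| kGamma_one : kGamma c kone
| kGamma_gen j : kGamma c (kzeta c j)
| kGamma_add x y : kGamma c x -> kGamma c y -> kGamma c (kadd x y)
| kGamma_scale a x : kGamma c x -> kGamma c (kscale a x)
| kGamma_mul x y : kGamma c x -> kGamma c y -> kGamma c (kwedge x y).

Inductive kGammaB (f : 'I_r -> R) (s : nat) (c : 'M[R]_(r, s)) : kosz R r -> Prop :=
| kGammaB_gen (j : nat) g b : (j <= r)%N -> kGamma c g -> khomog j g ->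
    kbound f (r - j) b -> kGammaB f c (kwedge g b)
| kGammaB_zero : kGammaB f c kzero
| kGammaB_add x y : kGammaB f c x -> kGammaB f c y -> kGammaB f c (kadd x y)
| kGammaB_scale a x : kGammaB f c x -> kGammaB f c (kscale a x).

End Koszul.

(* Main.v *)
Require Import Defs.
From HB Require Import structures.
From mathcomp Require Import all_boot all_order all_algebra.
From mathcomp Require Import zify ring.
Import GRing.Theory.
Local Open Scope ring_scope.

Definition kcnt {r} (S : {set 'I_r}) (i : 'I_r) : nat := (\sum_(l in S) (l < i)%N)%N.
Definition kdnt {r} (S : {set 'I_r}) (i : 'I_r) : nat := (\sum_(l in S) (i < l)%N)%N.
Definition kinv {r} (S T : {set 'I_r}) : nat := (\sum_(p in S) kcnt T p)%N.

Lemma card_cnt {r} (S : {set 'I_r}) (i : 'I_r) : #|[set l in S | (l < i)%N]| = kcnt S i.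
Proof.
rewrite -sum1_card /kcnt big_mkcond [RHS]big_mkcond /=; apply: eq_bigr => l _.
by rewrite !inE; case: (l \in S); case: (l < i)%N.
Qed.


Lemma cntU {r} (S T : {set 'I_r}) (i : 'I_r) : [disjoint S & T] -> kcnt (S :|: T) i = (kcnt S i + kcnt T i)%N.
Proof.
move=> dST; rewrite /kcnt -bigU //; apply: eq_bigl => l; by rewrite !inE.
Qed.

Lemma cntU1 {r} (A : {set 'I_r}) (i j : 'I_r) : i \notin A -> kcnt (i |: A) j = ((i < j)%N + kcnt A j)%N.
Proof. by move=> iA; rewrite /kcnt big_setU1. Qed.

Lemma cnt_self {r} (A : {set 'I_r}) (i : 'I_r) : i \notin A -> kcnt (i |: A) i = kcnt A i.
Proof. by move=> iA; rewrite cntU1 // ltnn. Qed.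

Lemma invU1l {r} (A T : {set 'I_r}) (i : 'I_r) : i \notin A -> kinv (i |: A) T = (kcnt T i + kinv A T)%N.
Proof. by move=> iA; rewrite /kinv big_setU1. Qed.

Lemma invU1r {r} (S B : {set 'I_r}) (i : 'I_r) : i \notin B -> kinv S (i |: B) = (kdnt S i + kinv S B)%N.
Proof.
move=> iB; rewrite /kinv /kdnt -big_split /=; apply: eq_bigr => p _; exact: cntU1.
Qed.

Lemma cnt_dnt {r} (A : {set 'I_r}) (i : 'I_r) : i \notin A -> (kcnt A i + kdnt A i)%N = #|A|.
Proof.
move=> iA; rewrite /kcnt /kdnt -big_split -sum1_card /=; apply: eq_bigr => l lA.
have: l != i by apply: contraNneq iA => <-.
by rewrite neq_ltn; case: ltngtP.
Qed.

Lemma sgn_sq (R : pzRingType) n : (-1) ^+ n * (-1) ^+ n = 1 :> R.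
Proof. by rewrite -exprD -signr_odd addnn odd_double. Qed.
Lemma card_kinv {r} (S T : {set 'I_r}) :
  #|[set p : 'I_r * 'I_r | [&& p.1 \in S, p.2 \in T & (p.2 < p.1)%N]]| = kinv S T.
Proof.
rewrite -sum1_card /kinv /kcnt big_mkcond /=.
rewrite [RHS]big_mkcond /=.
rewrite (eq_bigr (fun p : 'I_r => \sum_(q : 'I_r) (if p \in S then if q \in T then nat_of_bool (q < p)%N else 0%N else 0%N))%N); last first.
  move=> p _; case: ifP => _; last by rewrite big1.
  by rewrite big_mkcond.
rewrite pair_big /=; apply: eq_bigr => [[p q]] _ /=; rewrite !inE /=.
by case: (p \in S); case: (q \in T); case: (q < p)%N.
Qed.

Lemma sgn_dbl (R : pzRingType) m k : (-1) ^+ (m + k + k) = (-1) ^+ m :> R.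
Proof. by rewrite -addnA exprD [X in _ * X]exprD sgn_sq mulr1. Qed.

Definition keps {R : pzRingType} {r} (S : {set 'I_r}) (i : 'I_r) : R :=
  (-1) ^+ #|[set l in S | (l < i)%N]|.

Lemma kepsE (R : pzRingType) {r} (S : {set 'I_r}) i : keps S i = (-1) ^+ kcnt S i :> R.
Proof. by rewrite /keps card_cnt. Qed.

Lemma ksgnE (R : comPzRingType) {r} (S T : {set 'I_r}) : ksgn R S T = (-1) ^+ kinv S T.
Proof. by rewrite /ksgn card_kinv. Qed.

Lemma disjP {T : finType} (A B : {set T}) :
  reflect (forall x, x \in A -> x \in B -> False) [disjoint A & B].
Proof.
rewrite -setI_eq0; apply: (iffP eqP) => [h x xA xB | h].
  by have := in_set0 x; rewrite -h inE xA xB.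
apply/setP => x; rewrite !inE; apply/negP => /andP[]; exact: h.
Qed.

Lemma disjU1 {T : finType} (i : T) (A B : {set T}) :
  i \notin B -> [disjoint A & B] -> [disjoint i |: A & B].
Proof.
move=> iB /disjP dAB; apply/disjP => x; rewrite !inE => /orP[/eqP->|xA] xB.
  by rewrite xB in iB.
exact: dAB xA xB.
Qed.

Lemma L1 (R : comPzRingType) {r} (A T : {set 'I_r}) i :
  i \notin A -> i \notin T -> [disjoint A & T] ->
  keps ((i |: A) :|: T) i * ksgn R (i |: A) T = ksgn R A T * keps (i |: A) i.
Proof.
move=> iA iT dAT.
have dST : [disjoint i |: A & T] by apply: disjU1.
rewrite !kepsE !ksgnE cntU // invU1l // cnt_self // -!exprD.
rewrite -(sgn_dbl _ (kinv A T + kcnt A i) (kcnt T i)); congr (_ ^+ _); lia.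
Qed.

Lemma L2 (R : comPzRingType) {r} (S B : {set 'I_r}) i :
  i \notin S -> i \notin B -> [disjoint S & B] ->
  keps (S :|: (i |: B)) i * ksgn R S (i |: B) = (-1) ^+ #|S| * ksgn R S B * keps (i |: B) i.
Proof.
move=> iS iB dSB.
have dST : [disjoint S & i |: B] by rewrite disjoint_sym; apply: disjU1; rewrite // disjoint_sym.
rewrite !kepsE !ksgnE cntU // invU1r // cnt_self // -!exprD -(cnt_dnt S i iS).
congr (_ ^+ _); lia.
Qed.

Lemma sgnS (R : pzRingType) n : (-1) ^+ n.+1 = - (-1) ^+ n :> R.
Proof. by rewrite exprS mulN1r. Qed.

Lemma L3 (R : comPzRingType) {r} (A B : {set 'I_r}) i :
  i \notin A -> i \notin B -> [disjoint A & B] ->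
  ksgn R A (i |: B) * keps (i |: A) i + (-1) ^+ #|i |: A| * ksgn R (i |: A) B * keps (i |: B) i = 0.
Proof.
move=> iA iB dAB.
rewrite !kepsE !ksgnE invU1r // invU1l // !cnt_self // cardsU1 iA -!exprD -(cnt_dnt A i iA).
have -> : (true + (kcnt A i + kdnt A i) + (kcnt B i + kinv A B) + kcnt B i =
   (kdnt A i + kinv A B + kcnt A i).+1 + kcnt B i + kcnt B i)%N by simpl; lia.
rewrite sgn_dbl.
by rewrite sgnS subrr.
Qed.

Lemma disjU1E {T : finType} (i : T) (A B : {set T}) :
  i \notin B -> [disjoint i |: A & B] = [disjoint A & B].
Proof.
move=> iB; apply/idP/idP => [|]; last exact: disjU1.
apply: disjointWl; exact: subsetUr.
Qed.

Lemma disjU1E' {T : finType} (i : T) (A B : {set T}) :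
  i \notin A -> [disjoint A & i |: B] = [disjoint A & B].
Proof. by move=> iA; rewrite disjoint_sym disjU1E // disjoint_sym. Qed.

Lemma split1 {T : finType} (i : T) (S : {set T}) :
  i \in S -> exists2 A : {set T}, i \notin A & S = i |: A.
Proof. by move=> iS; exists (S :\ i); [rewrite !inE eqxx | rewrite setD1K]. Qed.

Definition Phi0 (R : comPzRingType) {r} (S T : {set 'I_r}) i U : R :=
  if [disjoint S & T] && ((i \in S :|: T) && ((S :|: T) :\ i == U))
  then keps (S :|: T) i * ksgn R S T else 0.
Definition Phi1 (R : comPzRingType) {r} (S T : {set 'I_r}) i U : R :=
  if (i \in S) && ([disjoint S :\ i & T] && ((S :\ i) :|: T == U))
  then ksgn R (S :\ i) T * keps S i else 0.
Definition Phi2 (R : comPzRingType) {r} (S T : {set 'I_r}) i U : R :=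
  if (i \in T) && ([disjoint S & T :\ i] && (S :|: (T :\ i) == U))
  then (-1) ^+ #|S| * ksgn R S (T :\ i) * keps T i else 0.

Lemma Phi_eq (R : comPzRingType) {r} (S T : {set 'I_r}) i U :
  Phi0 R S T i U = Phi1 R S T i U + Phi2 R S T i U.
Proof.
rewrite /Phi0 /Phi1 /Phi2.
case: (boolP (i \in S)) => iS; case: (boolP (i \in T)) => iT.
- have [A iA eS] := split1 _ _ iS; have [B iB eT] := split1 _ _ iT; subst S T.
  rewrite !setU1K // !inE eqxx /=.
  rewrite (disjU1E' i A B iA) (disjU1E i A B iB).
  have -> : [disjoint i |: A & i |: B] = false.
    apply/negbTE/negP => /disjP/(_ i); rewrite !inE eqxx; by apply.
  have -> : A :|: (i |: B) = (i |: A) :|: B by rewrite setUCA setUA.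
  rewrite /=; case: ifP => [/andP[dAB _]|_]; last by rewrite addr0.
  by rewrite L3.
- have [A iA eS] := split1 _ _ iS; subst S.
  rewrite !setU1K // !inE eqxx /= (disjU1E i A T iT).
  have -> : (i |: A :|: T) :\ i = A :|: T.
    apply/setP => x; rewrite !inE; case: (eqVneq x i) => [->|] //=.
    by rewrite (negbTE iA) (negbTE iT).
  rewrite addr0; case: ifP => // /andP[dAT _]; exact: L1.
- have [B iB eT] := split1 _ _ iT; subst T.
  rewrite !setU1K // !inE eqxx /= orbT (disjU1E' i S B iS).
  have -> : (S :|: (i |: B)) :\ i = S :|: B.
    apply/setP => x; rewrite !inE; case: (eqVneq x i) => [->|] //=.
    by rewrite (negbTE iS) (negbTE iB).
  rewrite add0r; case: ifP => // /andP[dSB _]; exact: L2.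
- by rewrite !inE (negbTE iS) (negbTE iT) /= andbF add0r.
Qed.



Lemma collapse (R : comPzRingType) (J : finType) (g : J) (F : J -> R) (C : J -> bool) :
  (forall V, V != g -> C V = false) ->
  \sum_V (if C V then F V else 0) = if C g then F g else 0.
Proof.
move=> h; rewrite (bigD1 g) //= big1 ?addr0 // => V nV; by rewrite h.
Qed.

Lemma E0 (R : comPzRingType) {r} (f : 'I_r -> R) (x y : kosz R r) U :
  kdiff f (kwedge x y) U = \sum_S \sum_T \sum_i Phi0 R S T i U * (f i * x S * y T).
Proof.
rewrite ffunE.
transitivity (\sum_(V : {set 'I_r}) \sum_(i : 'I_r) \sum_(S : {set 'I_r}) \sum_(T : {set 'I_r})
  (if ((i \in V) && (V :\ i == U)) && ([disjoint S & T] && (S :|: T == V))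
   then keps V i * f i * (ksgn R S T * x S * y T) else 0)).
  apply: eq_bigr => V _; rewrite big_mkcond; apply: eq_bigr => i _; rewrite ffunE.
  case: ifP => /= c1; last by rewrite big1 // => S _; rewrite big1.
  rewrite mulr_sumr; apply: eq_bigr => S _; rewrite mulr_sumr big_mkcond; apply: eq_bigr => T _.
  by case: ifP.
rewrite exchange_big /=.
under eq_bigr do rewrite exchange_big /=.
under eq_bigr do under eq_bigr do rewrite exchange_big /=.
rewrite exchange_big /=.
under eq_bigr do rewrite exchange_big /=.
apply: eq_bigr => S _; apply: eq_bigr => T _; apply: eq_bigr => i _.
rewrite (collapse _ _ (S :|: T)); last by move=> V nV; rewrite (_ : (S :|: T == V) = false) ?andbF //; apply/negbTE; rewrite eq_sym.
rewrite eqxx andbT /Phi0 andbC; case: ifP => _; last by rewrite mul0r.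
rewrite /keps; ring.
Qed.

Definition ksigma {R : comPzRingType} {r} (x : kosz R r) : kosz R r :=
  [ffun S : {set 'I_r} => (-1) ^+ #|S| * x S].

Lemma E1 (R : comPzRingType) {r} (f : 'I_r -> R) (x y : kosz R r) U :
  kwedge (kdiff f x) y U = \sum_S \sum_T \sum_i Phi1 R S T i U * (f i * x S * y T).
Proof.
rewrite ffunE.
transitivity (\sum_(S' : {set 'I_r}) \sum_(T : {set 'I_r}) \sum_(S : {set 'I_r}) \sum_(i : 'I_r)
  (if ([disjoint S' & T] && (S' :|: T == U)) && ((i \in S) && (S :\ i == S'))
   then ksgn R S' T * (keps S i * f i * x S) * y T else 0)).
  apply: eq_bigr => S' _; rewrite big_mkcond; apply: eq_bigr => T _; rewrite ffunE.
  case: ifP => /= c1; last by rewrite big1 // => S _; rewrite big1.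
  rewrite mulr_sumr mulr_suml; apply: eq_bigr => S _.
  rewrite mulr_sumr mulr_suml big_mkcond; apply: eq_bigr => i _.
  by case: ifP => _; rewrite ?mulr0 ?mul0r.
under eq_bigr do rewrite exchange_big /=.
rewrite exchange_big /=.
under eq_bigr do rewrite exchange_big /=.
under eq_bigr do under eq_bigr do rewrite exchange_big /=.
apply: eq_bigr => S _; apply: eq_bigr => T _; apply: eq_bigr => i _.
rewrite (collapse _ _ (S :\ i)); last first.
  by move=> V nV; rewrite (_ : (S :\ i == V) = false) ?andbF //; apply/negbTE; rewrite eq_sym.
rewrite eqxx andbT /Phi1 andbC; case: ifP => _; last by rewrite mul0r.
rewrite /keps; ring.
Qed.

Lemma E2 (R : comPzRingType) {r} (f : 'I_r -> R) (x y : kosz R r) U :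
  kwedge (ksigma x) (kdiff f y) U = \sum_S \sum_T \sum_i Phi2 R S T i U * (f i * x S * y T).
Proof.
rewrite ffunE.
transitivity (\sum_(S : {set 'I_r}) \sum_(T' : {set 'I_r}) \sum_(T : {set 'I_r}) \sum_(i : 'I_r)
  (if ([disjoint S & T'] && (S :|: T' == U)) && ((i \in T) && (T :\ i == T'))
   then ksgn R S T' * ((-1) ^+ #|S| * x S) * (keps T i * f i * y T) else 0)).
  apply: eq_bigr => S _; rewrite big_mkcond; apply: eq_bigr => T' _; rewrite !ffunE.
  case: ifP => /= c1; last by rewrite big1 // => T _; rewrite big1.
  rewrite mulr_sumr; apply: eq_bigr => T _.
  rewrite mulr_sumr big_mkcond; apply: eq_bigr => i _.
  by case: ifP => _; rewrite ?mulr0 ?mul0r.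
under eq_bigr do rewrite exchange_big /=.
under eq_bigr do under eq_bigr do rewrite exchange_big /=.
apply: eq_bigr => S _; apply: eq_bigr => T _; apply: eq_bigr => i _.
rewrite (collapse _ _ (T :\ i)); last first.
  by move=> V nV; rewrite (_ : (T :\ i == V) = false) ?andbF //; apply/negbTE; rewrite eq_sym.
rewrite eqxx andbT /Phi2 andbC; case: ifP => _; last by rewrite mul0r.
rewrite /keps; ring.
Qed.

Lemma leibniz (R : comPzRingType) {r} (f : 'I_r -> R) (x y : kosz R r) :
  kdiff f (kwedge x y) = kadd (kwedge (kdiff f x) y) (kwedge (ksigma x) (kdiff f y)).
Proof.
apply/ffunP => U; rewrite E0 [RHS]ffunE E1 E2 -!big_split /=.
apply: eq_bigr => S _; rewrite -big_split; apply: eq_bigr => T _; rewrite -big_split.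
by apply: eq_bigr => i _; rewrite Phi_eq mulrDl.
Qed.

Lemma kdiff0 (R : comPzRingType) {r} (f : 'I_r -> R) : kdiff f (kzero R r) = kzero R r.
Proof.
apply/ffunP => U; rewrite !ffunE big1 // => S _; rewrite big1 // => i _; by rewrite ffunE mulr0.
Qed.

Lemma kdiffD (R : comPzRingType) {r} (f : 'I_r -> R) x y :
  kdiff f (kadd x y) = kadd (kdiff f x) (kdiff f y).
Proof.
apply/ffunP => U; rewrite !ffunE -big_split; apply: eq_bigr => S _.
rewrite -big_split; apply: eq_bigr => i _; by rewrite ffunE mulrDr.
Qed.

Lemma kdiffZ (R : comPzRingType) {r} (f : 'I_r -> R) a x :
  kdiff f (kscale a x) = kscale a (kdiff f x).
Proof.
apply/ffunP => U; rewrite !ffunE mulr_sumr; apply: eq_bigr => S _.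
rewrite mulr_sumr; apply: eq_bigr => i _; rewrite ffunE; ring.
Qed.

Lemma kwedgeZl (R : comPzRingType) {r} a (x y : kosz R r) :
  kwedge (kscale a x) y = kscale a (kwedge x y).
Proof.
apply/ffunP => U; rewrite !ffunE mulr_sumr; apply: eq_bigr => S _.
rewrite mulr_sumr; apply: eq_bigr => T _; rewrite ffunE; ring.
Qed.

Lemma kwedge1 (R : comPzRingType) {r} (x : kosz R r) : kwedge (kone R r) x = x.
Proof.
apply/ffunP => U; rewrite ffunE (bigD1 set0) //=.
rewrite [X in _ + X]big1 ?addr0; last first.
  move=> S nS; apply: big1 => T _; rewrite /kone /kbasis ffunE (negbTE nS).
  by rewrite mulr0 mul0r.
rewrite (bigD1 U) /=; last by rewrite set0U eqxx andbT; apply/disjP => z; rewrite inE.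
rewrite big1 ?addr0; last first.
  by move=> T /andP[/andP[_ /eqP]]; rewrite set0U => -> ; rewrite eqxx.
have -> : ksgn R set0 U = 1.
  by rewrite ksgnE /kinv big_pred0 // => p; rewrite inE.
by rewrite /kone /kbasis ffunE eqxx !mul1r.
Qed.

Lemma ksigma_homog (R : comPzRingType) {r} k (x : kosz R r) :
  khomog k x -> ksigma x = kscale ((-1) ^+ k) x.
Proof.
move=> hx; apply/ffunP => S; rewrite !ffunE.
case: (eqVneq #|S| k) => [->//|nS]; by rewrite hx // !mulr0.
Qed.

Lemma wedge_homog0 (R : comPzRingType) {r} j k (g y : kosz R r) :
  khomog j g -> khomog k y -> (r < j + k)%N -> kwedge g y = kzero R r.
Proof.
move=> hg hy ltr; apply/ffunP => U; rewrite !ffunE; apply: big1 => S _.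
apply: big1 => T /andP[dST _].
case: (eqVneq #|S| j) => [eS|nS]; last by rewrite hg // mulr0 mul0r.
case: (eqVneq #|T| k) => [eT|nT]; last by rewrite hy // mulr0.
have : (#|S :|: T| <= r)%N by rewrite -[X in (_ <= X)%N]card_ord max_card.
have e0 : S :&: T = set0 by apply/eqP; rewrite setI_eq0.
rewrite cardsU e0 cards0 subn0 eS eT => h.
by move: ltr; rewrite ltnNge h.
Qed.


Definition inA {R : comPzRingType} {s} (a : 'I_s -> R) (z : R) : Prop :=
  exists u : 'I_s -> R, z = \sum_(j < s) u j * a j.

Lemma inA0 (R : comPzRingType) s (a : 'I_s -> R) : inA a 0.
Proof. by exists (fun _ => 0); rewrite big1 // => j _; rewrite mul0r. Qed.

Lemma inAD (R : comPzRingType) s (a : 'I_s -> R) z w : inA a z -> inA a w -> inA a (z + w).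
Proof.
move=> [u ->] [v ->]; exists (fun j => u j + v j); rewrite -big_split /=.
by apply: eq_bigr => j _; rewrite mulrDl.
Qed.

Lemma inAM (R : comPzRingType) s (a : 'I_s -> R) b z : inA a z -> inA a (b * z).
Proof.
move=> [u ->]; exists (fun j => b * u j); rewrite mulr_sumr.
by apply: eq_bigr => j _; rewrite mulrA.
Qed.

Lemma inAMr (R : comPzRingType) s (a : 'I_s -> R) b z : inA a z -> inA a (z * b).
Proof. by move=> h; rewrite mulrC; apply: inAM. Qed.

Lemma inA_sum (R : comPzRingType) s (a : 'I_s -> R) (I : finType) (P : pred I) (F : I -> R) :
  (forall i, P i -> inA a (F i)) -> inA a (\sum_(i | P i) F i).
Proof.
move=> h; apply: (big_ind (inA a)); [exact: inA0 | exact: inAD | exact: h].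
Qed.

Definition kid {R : comPzRingType} {r s} (a : 'I_s -> R) (X : kosz R r) : Prop :=
  forall S, inA a (X S).

Lemma kid_wedgel (R : comPzRingType) r s (a : 'I_s -> R) (X Y : kosz R r) :
  kid a X -> kid a (kwedge X Y).
Proof.
move=> h U; rewrite ffunE; apply: inA_sum => S _; apply: inA_sum => T _.
by apply: inAMr; apply: inAM.
Qed.

Lemma kid_wedger (R : comPzRingType) r s (a : 'I_s -> R) (X Y : kosz R r) :
  kid a Y -> kid a (kwedge X Y).
Proof.
move=> h U; rewrite ffunE; apply: inA_sum => S _; apply: inA_sum => T _.
exact: inAM.
Qed.

Lemma kid_add (R : comPzRingType) r s (a : 'I_s -> R) (X Y : kosz R r) :
  kid a X -> kid a Y -> kid a (kadd X Y).
Proof. by move=> hX hY U; rewrite ffunE; apply: inAD. Qed.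

Lemma kdiff1 (R : comPzRingType) {r} (f : 'I_r -> R) : kdiff f (kone R r) = kzero R r.
Proof.
apply/ffunP => U; rewrite !ffunE; apply: big1 => S _; apply: big1 => i /andP[iS _].
rewrite /kone /kbasis ffunE; case: (eqVneq S set0) => [eS|]; last by rewrite mulr0.
by move: iS; rewrite eS inE.
Qed.

Lemma kdiff_zeta (R : comPzRingType) {r s} (f : 'I_r -> R) (a : 'I_s -> R) (c : 'M[R]_(r, s))
  (Ha : forall j : 'I_s, a j = \sum_(i < r) c i j * f i) j :
  kdiff f (kzeta c j) = kscale (a j) (kone R r).
Proof.
apply/ffunP => U; rewrite !ffunE Ha.
transitivity (\sum_(S : {set 'I_r}) \sum_(i : 'I_r) \sum_(k : 'I_r)
  (if ((i \in S) && (S :\ i == U)) && (S == [set k]) then keps S i * f i * c k j else 0)).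
  apply: eq_bigr => S _; rewrite big_mkcond; apply: eq_bigr => i _; rewrite ffunE.
  case: ifP => _ /=; last by rewrite big1.
  rewrite mulr_sumr; apply: eq_bigr => k _.
  by rewrite /keps; case: eqP => _; rewrite /= ?mul1r ?mul0r ?mulr0.
rewrite exchange_big /=; under eq_bigr do rewrite exchange_big /=.
rewrite mulr_suml; apply: eq_bigr => i _.
rewrite (eq_bigr (fun k : 'I_r => if (i \in [set k]) && ([set k] :\ i == U) then keps [set k] i * f i * c k j else 0)); last first.
  move=> k _; rewrite (collapse _ _ [set k]) ?eqxx ?andbT //.
  by move=> V nV; rewrite (negbTE nV) andbF.
rewrite (collapse _ _ i) ?inE ?eqxx /=; last first.
  by move=> k nk; rewrite inE eq_sym (negbTE nk).
rewrite setDv /keps (_ : #|[set l in [set i] | (l < i)%N]| = 0%N) ?expr0; last first.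
  by apply/eqP; rewrite cards_eq0; apply/eqP/setP => l; rewrite !inE; case: eqVneq => // ->; rewrite ltnn.
rewrite (eq_sym set0); case: (U == set0); rewrite ?mulr1 ?mulr0 ?mul1r //.
by rewrite mulrC.
Qed.

Lemma kid_scale (R : comPzRingType) r s (a : 'I_s -> R) b (X : kosz R r) :
  kid a X -> kid a (kscale b X).
Proof. by move=> h U; rewrite ffunE; apply: inAM. Qed.

Lemma kid_zero (R : comPzRingType) r s (a : 'I_s -> R) : kid a (kzero R r).
Proof. by move=> U; rewrite ffunE; apply: inA0. Qed.

Lemma gamma_diff (R : comPzRingType) {r s} (f : 'I_r -> R) (a : 'I_s -> R) (c : 'M[R]_(r, s))
  (Ha : forall j : 'I_s, a j = \sum_(i < r) c i j * f i) g :
  kGamma c g -> kid a (kdiff f g).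
Proof.
elim => [|j|x y _ hx _ hy|b x _ hx|x y _ hx _ hy].
- rewrite kdiff1; exact: kid_zero.
- rewrite (@kdiff_zeta _ _ _ f a c Ha j) => U; rewrite !ffunE; apply: inAMr.
  exists (fun k => (k == j)%:R); rewrite (bigD1 j) //= eqxx mul1r big1 ?addr0 // => k nk.
  by rewrite (negbTE nk) mul0r.
- rewrite kdiffD; exact: kid_add.
- rewrite kdiffZ; exact: kid_scale.
- rewrite leibniz; apply: kid_add; [exact: kid_wedgel | exact: kid_wedger].
Qed.

Lemma ktop_homog (R : comPzRingType) r : khomog r (ktop R r).
Proof.
move=> S nS; rewrite ffunE; case: eqP => [eS|]; last by [].
by move: nS; rewrite eS cardsT card_ord eqxx.
Qed.

Lemma kzeta_homog (R : comPzRingType) r s (c : 'M[R]_(r, s)) j : khomog 1 (kzeta c j).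
Proof.
move=> S nS; rewrite ffunE; apply: big1 => i _; case: eqP => [eS|]; last by rewrite mul0r.
by move: nS; rewrite eS cards1.
Qed.

Lemma kaddE (R : comPzRingType) r (x y : kosz R r) U : kadd x y U = x U + y U.
Proof. by rewrite ffunE. Qed.
Lemma kscaleE (R : comPzRingType) r b (x : kosz R r) U : kscale b x U = b * x U.
Proof. by rewrite ffunE. Qed.
Lemma kzeroE (R : comPzRingType) r U : kzero R r U = 0.
Proof. by rewrite ffunE. Qed.

Theorem lemma4p21 (R : comPzRingType) (r s : nat) (f : 'I_r -> R)
    (a : 'I_s -> R) (c : 'M[R]_(r, s))
    (Ha : forall j : 'I_s, a j = \sum_(i < r) c i j * f i) :
  forall x : R,
    (exists y : kosz R r, kGammaB f c y /\ y = kscale x (ktop R r)) <->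
    (exists u : 'I_s -> R, x = \sum_(j < s) u j * a j).
Proof.
move=> x; split.
- move=> [y [hy ey]].
  have key : forall z, kGammaB f c z -> inA a (z setT).
    move=> z; elim => [j g b hj hg hgj [y' [hy' ->]] | | z1 w _ hz _ hw | b z1 _ hz].
    + have h0 : kwedge g y' = kzero R r.
        by apply: (@wedge_homog0 R r j (r - j).+1 g y' hgj hy'); lia.
      have := @leibniz R r f g y'.
      rewrite h0 kdiff0 (@ksigma_homog R r j g hgj) kwedgeZl => /ffunP/(_ setT).
      rewrite kzeroE kaddE kscaleE.
      set B := kwedge g (kdiff f y') setT; set A := kwedge (kdiff f g) y' setT => E.
      have sB : (-1) ^+ j * B = - A.
        by apply/eqP; rewrite -addr_eq0 addrC -E.
      have -> : B = - (-1) ^+ j * A.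
        transitivity ((-1) ^+ j * ((-1) ^+ j * B)); first by rewrite mulrA sgn_sq mul1r.
        by rewrite sB mulrN mulNr.
      apply: inAM; apply: kid_wedgel; exact: (@gamma_diff R r s f a c Ha g hg).
    + rewrite ffunE; exact: inA0.
    + rewrite ffunE; exact: inAD.
    + rewrite ffunE; exact: inAM.
  have := key _ hy; rewrite ey ffunE /ktop /kbasis ffunE eqxx mulr1; done.
- move=> [u ->].
  have hj : forall j, kGammaB f c (kscale (a j) (ktop R r)).
    move=> j; case: (posnP r) => [r0 | rpos].
      have -> : a j = 0 by rewrite Ha big1 // => [[i hi]]; exfalso; move: hi; rewrite r0.
      have -> : kscale 0 (ktop R r) = kzero R r by apply/ffunP => U; rewrite !ffunE mul0r.
      exact: kGammaB_zero.
    have eW : kwedge (kzeta c j) (kdiff f (ktop R r)) = kscale (a j) (ktop R r).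
      have := @leibniz R r f (kzeta c j) (ktop R r).
      rewrite (@wedge_homog0 R r 1 r _ _ (@kzeta_homog R r s c j) (ktop_homog R r)); last by rewrite add1n.
      rewrite kdiff0 (@kdiff_zeta _ _ _ f a c Ha j) kwedgeZl kwedge1.
      rewrite (@ksigma_homog R r 1 _ (@kzeta_homog R r s c j)) kwedgeZl => /ffunP E.
      apply/ffunP => U; move: (E U); rewrite kzeroE !kaddE !kscaleE expr1 mulN1r => E'.
      by apply/eqP; rewrite eq_sym -subr_eq0 -E'.
    rewrite -eW; apply: (@kGammaB_gen R r f s c 1%N) => //.
    + exact: kGamma_gen.
    + exact: kzeta_homog.
    + exists (ktop R r); split => //; rewrite subn1 prednK //; exact: ktop_homog.
  exists (kscale (\sum_(j < s) u j * a j) (ktop R r)); split => //.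
  apply: (big_rec (fun z => kGammaB f c (kscale z (ktop R r)))).
    have -> : kscale 0 (ktop R r) = kzero R r by apply/ffunP => U; rewrite !ffunE mul0r.
    exact: kGammaB_zero.
  move=> j z _ hz.
  have -> : kscale (u j * a j + z) (ktop R r) =
      kadd (kscale (u j) (kscale (a j) (ktop R r))) (kscale z (ktop R r)).
    by apply/ffunP => U; rewrite !ffunE; ring.
  apply: kGammaB_add => //; exact: kGammaB_scale.
Qed.
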